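(* Let $L\ge 1$ and $n\ge0$ be integers. Let $\tilde A_{L,0}(n)$ be the number of partitions $\pi$ of $n$ into parts congruent to $\pm1\pmod 8$ with largest part at most $8L-1$, such that $\nu(\pi,1)\ge\nu(\pi,7)$ and, writing $D=\nu(\pi,1)-\nu(\pi,7)$, at least one of the following holds: (i) $3\mid D$ and $\mu(\pi,1)\ge \tfrac23 D$; (ii) $5\mid D$, $3\nmid D$, and $\mu(\pi,1)\ge\tfrac45 D$; (iii) $D\equiv -8\pmod{15}$, $\mu(\pi,7)>0$, and $\mu(\pi,1)\ge\tfrac15(4D-3)$. Then $\tilde A_{L,0}(n)=A_{L,1}(n)$, where $A_{L,1}(n)$ is the number of partitions of $n$ into parts congruent to $\pm3\pmod 8$ with largest part at most $8L-3$.
   Context: For a partition $\pi$, $\nu(\pi,i)$ denotes the number of parts of $\pi$ congruent to $i\pmod 8$, and $\mu(\pi,i)$ denotes the number of parts of $\pi$ equal to $i$. *)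

(* Defs.v *)
From mathcomp Require Import all_boot.
Set Implicit Arguments. Unset Strict Implicit. Unset Printing Implicit Defensive.

(* A partition of n is represented by its multiplicity function:
   m i = number of parts equal to i, for 1 <= i <= n (m 0 = 0).
   Every multiplicity is at most n, so m : 'I_n.+1 -> 'I_n.+1 loses nothing,
   and this is a bijection with the partitions of n. *)
Definition partitions (n : nat) : {set {ffun 'I_n.+1 -> 'I_n.+1}} :=
  [set m : {ffun 'I_n.+1 -> 'I_n.+1} | (nat_of_ord (m ord0) == 0) && (\sum_(i < n.+1) i * m i == n)].

Definition nu n (m : {ffun 'I_n.+1 -> 'I_n.+1}) (r : nat) : nat :=
  \sum_(i < n.+1 | i %% 8 == r %% 8) m i.

Definition mu n (m : {ffun 'I_n.+1 -> 'I_n.+1}) (k : nat) : nat :=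
  \sum_(i < n.+1 | nat_of_ord i == k) m i.

Definition parts_in n (m : {ffun 'I_n.+1 -> 'I_n.+1}) (P : pred nat) : bool :=
  [forall i : 'I_n.+1, (0 < m i) ==> P i].

Definition cond_tilde n (m : {ffun 'I_n.+1 -> 'I_n.+1}) : bool :=
  let D := nu m 1 - nu m 7 in
  (nu m 7 <= nu m 1) &&
  [|| (3 %| D) && (2 * D <= 3 * mu m 1),
      [&& 5 %| D, ~~ (3 %| D) & 4 * D <= 5 * mu m 1]
    | [&& 15 %| D + 8, 0 < mu m 7 & 4 * D <= 5 * mu m 1 + 3]].

Definition Atilde_L0 (L n : nat) : nat :=
  #|[set m in partitions n |
       parts_in m (fun i => ((i %% 8 == 1) || (i %% 8 == 7)) && (i <= 8 * L - 1))
       && cond_tilde m]|.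

Definition A_L1 (L n : nat) : nat :=
  #|[set m in partitions n |
       parts_in m (fun i => ((i %% 8 == 3) || (i %% 8 == 5)) && (i <= 8 * L - 3))]|.

(* Main.v *)
Require Import Defs.
From mathcomp Require Import all_boot zify.
Set Implicit Arguments. Unset Strict Implicit. Unset Printing Implicit Defensive.
Set Warnings "-notation-overridden".
Definition blk (g : nat -> nat) k :=
  g (k*8+0) + g (k*8+1) + g (k*8+2) + g (k*8+3) + g (k*8+4) + g (k*8+5) + g (k*8+6) + g (k*8+7).

Lemma sum_blk (g : nat -> nat) K : \sum_(i < K*8) g i = \sum_(k < K) blk g k.
Proof.
elim: K => [|K IH]; first by rewrite !big_ord0.
rewrite [RHS]big_ord_recr /= -IH.
have -> : K.+1 * 8 = K*8 + 8 by lia.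
rewrite -!(big_mkord xpredT g).
rewrite (@big_cat_nat _ _ _ (K*8)) /=; [|lia|lia].
congr (_ + _).
rewrite -{1}(add0n (K*8)) big_addn addKn big_mkord.
rewrite !big_ord_recl big_ord0 /= /blk /bump /=.
rewrite !addn0 !add0n !addnA.
by repeat (f_equal; try lia).
Qed.

Lemma ks k s : s < 8 -> (k*8+s) %% 8 = s /\ (k*8+s) %/ 8 = k.
Proof. move=> hs; split; lia. Qed.

Definition T p q c1 c7 (f : nat -> nat) i :=
  if i %% 8 == 1 then f (i %/ 8 * 8 + p) + (if i == 1 then c1 else 0)
  else if i %% 8 == 7 then f (i %/ 8 * 8 + q) + (if i == 7 then c7 else 0) else 0.

Definition U p q c1 c7 (g : nat -> nat) i :=
  if i %% 8 == p then g (i %/ 8 * 8 + 1) - (if i == p then c1 else 0)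
  else if i %% 8 == q then g (i %/ 8 * 8 + 7) - (if i == q then c7 else 0) else 0.

Lemma Tk p q c1 c7 f k s : s < 8 -> T p q c1 c7 f (k*8+s) =
  if s == 1 then f (k*8+p) + (if k == 0 then c1 else 0)
  else if s == 7 then f (k*8+q) + (if k == 0 then c7 else 0) else 0.
Proof.
move=> hs; rewrite /T; have [-> ->] := ks k hs.
case: eqP => [->|_]; first by case: k.
case: eqP => [->|_]; first by case: k.
by [].
Qed.

Lemma Uk p q c1 c7 g k s : s < 8 -> p < 8 -> q < 8 -> U p q c1 c7 g (k*8+s) =
  if s == p then g (k*8+1) - (if k == 0 then c1 else 0)
  else if s == q then g (k*8+7) - (if k == 0 then c7 else 0) else 0.
Proof.
move=> hs hp hq; rewrite /U; have [-> ->] := ks k hs.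
case: eqP => [->|_].
  by have -> : (k * 8 + p == p) = (k == 0) by apply/eqP/eqP; lia.
case: eqP => [->|_] //.
by have -> : (k * 8 + q == q) = (k == 0) by apply/eqP/eqP; lia.
Qed.

Lemma sum_cls (h : nat -> nat) K r : r < 8 ->
  \sum_(i < K*8) (if i %% 8 == r then h i else 0) = \sum_(k < K) h (k*8+r).
Proof.
move=> hr; rewrite (@sum_blk (fun i => if i %% 8 == r then h i else 0)); apply: eq_bigr => k _; rewrite /blk.
rewrite !(fun s (hs : s < 8) => proj1 (ks k hs)) //.
by case: r hr => [|[|[|[|[|[|[|[|]]]]]]]] //= _; rewrite ?addn0 ?add0n.
Qed.

Lemma sum_k0 K c : 0 < K -> \sum_(k < K) (if nat_of_ord k == 0 then c else 0) = c.
Proof.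
case: K => // K _; by rewrite big_ord_recl /= big1 ?addn0.

Qed.
Definition Wt K (h : nat -> nat) := \sum_(i < K*8) i * h i.
Definition Cs K (h : nat -> nat) r := \sum_(k < K) h (k*8+r).

Definition clsB (f : nat -> nat) := forall i, 0 < f i -> (i %% 8 == 3) || (i %% 8 == 5).
Definition clsA (f : nat -> nat) := forall i, 0 < f i -> (i %% 8 == 1) || (i %% 8 == 7).

Lemma clsB0 f k s : clsB f -> s < 8 -> s != 3 -> s != 5 -> f (k*8+s) = 0.
Proof.
move=> hf hs h3 h5; case: (posnP (f (k*8+s))) => // /hf.
by have [-> _] := ks k hs; rewrite (negbTE h3) (negbTE h5).
Qed.

Lemma clsA0 f k s : clsA f -> s < 8 -> s != 1 -> s != 7 -> f (k*8+s) = 0.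
Proof.
move=> hf hs h3 h5; case: (posnP (f (k*8+s))) => // /hf.
by have [-> _] := ks k hs; rewrite (negbTE h3) (negbTE h5).
Qed.

Lemma Wt_blk K h : Wt K h = \sum_(k < K) blk (fun i => i * h i) k.
Proof. by rewrite /Wt (@sum_blk (fun i => i * h i)). Qed.

Lemma T_W p q c1 c7 f K : (p == 3) && (q == 5) || (p == 5) && (q == 3) -> clsB f -> 0 < K ->
  Wt K (T p q c1 c7 f) + (p-1) * Cs K f p = Wt K f + (7-q) * Cs K f q + (c1 + 7*c7).
Proof.
move=> hpq hf hK.
rewrite !Wt_blk /Cs !big_distrr -(sum_k0 (c1 + 7 * c7) hK) -!big_split /=.
apply: eq_bigr => k _.
case/orP: hpq => /andP[/eqP -> /eqP ->]; rewrite /blk !Tk //= !(@clsB0 f k 0 hf isT isT isT) (@clsB0 f k 1 hf isT isT isT) (@clsB0 f k 2 hf isT isT isT) (@clsB0 f k 4 hf isT isT isT) (@clsB0 f k 6 hf isT isT isT) (@clsB0 f k 7 hf isT isT isT);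
 case: (nat_of_ord k) => [|k'] /=; nia.
Qed.

Lemma T_C1 p q c1 c7 f K : 0 < K -> Cs K (T p q c1 c7 f) 1 = Cs K f p + c1.
Proof.
move=> hK; rewrite /Cs (eq_bigr (fun k : 'I_K => f (k*8+p) + (if nat_of_ord k == 0 then c1 else 0))) => [|k _]; last by rewrite Tk.
by rewrite big_split /= sum_k0.
Qed.

Lemma T_C7 p q c1 c7 f K : 0 < K -> Cs K (T p q c1 c7 f) 7 = Cs K f q + c7.
Proof.
move=> hK; rewrite /Cs (eq_bigr (fun k : 'I_K => f (k*8+q) + (if nat_of_ord k == 0 then c7 else 0))) => [|k _]; last by rewrite Tk.
by rewrite big_split /= sum_k0.
Qed.

Lemma T1 p q c1 c7 f : T p q c1 c7 f 1 = f p + c1.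
Proof. by rewrite /T. Qed.
Lemma T7 p q c1 c7 f : T p q c1 c7 f 7 = f q + c7.
Proof. by rewrite /T. Qed.

Lemma UT p q c1 c7 f : (p == 3) && (q == 5) || (p == 5) && (q == 3) -> clsB f ->
  U p q c1 c7 (T p q c1 c7 f) =1 f.
Proof.
move=> hpq hf i.
have hi : i = i %/ 8 * 8 + i %% 8 by rewrite -divn_eq.
rewrite hi; have hs : i %% 8 < 8 by rewrite ltn_mod.
move: hs; move: (i %/ 8) (i %% 8) => k s hs.
case/orP: hpq => /andP[/eqP -> /eqP ->]; rewrite Uk // !Tk //=;
 (case: s hs => [|[|[|[|[|[|[|[|]]]]]]]] //= _; first [by rewrite addnK | by rewrite (clsB0 _ hf)]).
Qed.

Lemma TU p q c1 c7 g : (p == 3) && (q == 5) || (p == 5) && (q == 3) -> clsA g ->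
  c1 <= g 1 -> c7 <= g 7 -> T p q c1 c7 (U p q c1 c7 g) =1 g.
Proof.
move=> hpq hg h1 h7 i.
have hi : i = i %/ 8 * 8 + i %% 8 by rewrite -divn_eq.
rewrite hi; have hs : i %% 8 < 8 by rewrite ltn_mod.
move: hs; move: (i %/ 8) (i %% 8) => k s hs.
case/orP: hpq => /andP[/eqP -> /eqP ->]; rewrite Tk //;
 (case: s hs => [|[|[|[|[|[|[|[|]]]]]]]] //= _;
  try by rewrite (clsA0 _ hg)).
all: rewrite Uk //=; case: k => [|k] /=; rewrite ?mul0n ?add0n; lia.
Qed.

Definition goodB n L (f : nat -> nat) :=
  [/\ forall i, n < i -> f i = 0,
      forall i, 0 < f i -> ((i %% 8 == 3) || (i %% 8 == 5)) && (i <= 8 * L - 3)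
    & Wt n.+1 f = n].

Definition condN n (g : nat -> nat) : bool :=
  let D := Cs n.+1 g 1 - Cs n.+1 g 7 in
  (Cs n.+1 g 7 <= Cs n.+1 g 1) &&
  [|| (3 %| D) && (2 * D <= 3 * g 1),
      [&& 5 %| D, ~~ (3 %| D) & 4 * D <= 5 * g 1]
    | [&& 15 %| D + 8, 0 < g 7 & 4 * D <= 5 * g 1 + 3]].

Definition goodA n L (g : nat -> nat) :=
  [/\ forall i, n < i -> g i = 0,
      forall i, 0 < g i -> ((i %% 8 == 1) || (i %% 8 == 7)) && (i <= 8 * L - 1),
      Wt n.+1 g = n & condN n g].

Definition phi n (f : nat -> nat) :=
  let a := Cs n.+1 f 3 in let b := Cs n.+1 f 5 in
  if b <= a then T 3 5 (2 * (a - b)) 0 f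
  else if ~~ (3 %| (b - a)) then T 5 3 (4 * (b - a)) 0 f
  else T 5 3 (4 * (b - a) - 7) 1 f.

Definition psi n (g : nat -> nat) :=
  let D := Cs n.+1 g 1 - Cs n.+1 g 7 in
  if 3 %| D then U 3 5 (2 * (D %/ 3)) 0 g
  else if 5 %| D then U 5 3 (4 * (D %/ 5)) 0 g
  else U 5 3 ((4 * D - 3) %/ 5) 1 g.

Lemma term_le (F : nat -> nat) N i : i < N -> F i <= \sum_(j < N) F j.
Proof. move=> hi; by rewrite (bigD1 (Ordinal hi)) //= leq_addr. Qed.

Lemma zero_beyond n h : (forall i, n.+1 * 8 <= i -> h i = 0) -> Wt n.+1 h = n ->
  forall i, n < i -> h i = 0.
Proof.
move=> hz hw i hi; case: (ltnP i (n.+1 * 8)) => [hlt|]; last exact: hz.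
have := term_le (fun j => j * h j) hlt; rewrite -/(Wt n.+1 h) hw.
case: (posnP (h i)) => // hpos; nia.
Qed.

Lemma T_zero n p q c1 c7 f i : (forall j, n < j -> f j = 0) -> n.+1 * 8 <= i ->
  T p q c1 c7 f i = 0.
Proof.
move=> hz hi; rewrite /T.
case: ifP => _; first by rewrite hz; [case: eqP => //; lia | lia].
case: ifP => _ //; by rewrite hz; [case: eqP => //; lia | lia].
Qed.

Lemma U_zero n p q c1 c7 g i : (forall j, n < j -> g j = 0) -> n.+1 * 8 <= i ->
  U p q c1 c7 g i = 0.
Proof.
move=> hz hi; rewrite /U.
case: ifP => _; first by rewrite hz; lia.
case: ifP => _ //; by rewrite hz; lia.
Qed.

Lemma pq_cases p q : (p == 3) && (q == 5) || (p == 5) && (q == 3) -> (p = 3 /\ q = 5) \/ (p = 5 /\ q = 3).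
Proof. by case/orP => /andP[/eqP -> /eqP ->]; [left|right]. Qed.

Lemma Tgood n L p q c1 c7 f : 0 < L -> (p == 3) && (q == 5) || (p == 5) && (q == 3) ->
  goodB n L f -> Wt n.+1 (T p q c1 c7 f) = n -> condN n (T p q c1 c7 f) ->
  goodA n L (T p q c1 c7 f).
Proof.
move=> hL hpq [hz hs hw] hw' hc; split => //.
  by apply: (zero_beyond _ hw') => i hi; exact: (T_zero _ _ _ _ hz hi).
move=> i; rewrite /T.
have [[-> ->]|[-> ->]] := pq_cases hpq.
all: (case: ifP => h1; last case: ifP => h7 //).
all: case: eqP => [e|_]; [subst i => _ ; lia | rewrite addn0 => /hs; lia].
Qed.

Lemma Ugood n L p q c1 c7 g : 0 < L -> (p == 3) && (q == 5) || (p == 5) && (q == 3) ->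
  goodA n L g -> Wt n.+1 (U p q c1 c7 g) = n -> goodB n L (U p q c1 c7 g).
Proof.
move=> hL hpq [hz hs hw hc] hw'; split => //.
  by apply: (zero_beyond _ hw') => i hi; exact: (U_zero _ _ _ _ hz hi).
move=> i; rewrite /U.
have [[-> ->]|[-> ->]] := pq_cases hpq.
all: (case: ifP => h1; last case: ifP => h7 //).
all: move=> hpos; move: (leq_trans hpos (leq_subr _ _)) => /hs; lia.
Qed.

Lemma phi_good n L f : 0 < L -> goodB n L f ->
  goodA n L (phi n f) /\ psi n (phi n f) =1 f.
Proof.
move=> hL hB; have [hz hs hw] := hB.
have hcl : clsB f by move=> i /hs /andP[].
have hK : 0 < n.+1 by [].
rewrite /phi; set a := Cs n.+1 f 3; set b := Cs n.+1 f 5.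
case: leqP => hab.
  have hW := @T_W 3 5 (2*(a-b)) 0 f n.+1 isT hcl hK.
  have hC1 := @T_C1 3 5 (2*(a-b)) 0 f n.+1 hK.
  have hC7 := @T_C7 3 5 (2*(a-b)) 0 f n.+1 hK.
  have h1 := @T1 3 5 (2*(a-b)) 0 f; have h7 := @T7 3 5 (2*(a-b)) 0 f.
  rewrite -/a -/b in hW hC1 hC7 *.
  split.
    apply: Tgood => //; first by rewrite hw in hW; lia.
    rewrite /condN hC1 hC7 h1 h7; lia.
  move=> i; rewrite -(@UT 3 5 (2*(a-b)) 0 f isT hcl i) /psi hC1 hC7.
  rewrite ifT; last by lia.
  congr (U _ _ _ _ _ _); lia.
case: ifP => h3.
  have hW := @T_W 5 3 (4*(b-a)) 0 f n.+1 isT hcl hK.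
  have hC1 := @T_C1 5 3 (4*(b-a)) 0 f n.+1 hK.
  have hC7 := @T_C7 5 3 (4*(b-a)) 0 f n.+1 hK.
  have h1 := @T1 5 3 (4*(b-a)) 0 f; have h7 := @T7 5 3 (4*(b-a)) 0 f.
  rewrite -/a -/b in hW hC1 hC7 *.
  split.
    apply: Tgood => //; first by rewrite hw in hW; lia.
    rewrite /condN hC1 hC7 h1 h7; lia.
  move=> i; rewrite -(@UT 5 3 (4*(b-a)) 0 f isT hcl i) /psi hC1 hC7.
  rewrite ifF; last by lia.
  rewrite ifT; last by lia.
  congr (U _ _ _ _ _ _); lia.
have hW := @T_W 5 3 (4*(b-a)-7) 1 f n.+1 isT hcl hK.
have hC1 := @T_C1 5 3 (4*(b-a)-7) 1 f n.+1 hK.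
have hC7 := @T_C7 5 3 (4*(b-a)-7) 1 f n.+1 hK.
have h1 := @T1 5 3 (4*(b-a)-7) 1 f; have h7 := @T7 5 3 (4*(b-a)-7) 1 f.
rewrite -/a -/b in hW hC1 hC7 *.
split.
  apply: Tgood => //; first by rewrite hw in hW; lia.
  rewrite /condN hC1 hC7 h1 h7; lia.
move=> i; rewrite -(@UT 5 3 (4*(b-a)-7) 1 f isT hcl i) /psi hC1 hC7.
rewrite ifF; last by lia.
rewrite ifF; last by lia.
congr (U _ _ _ _ _ _); lia.
Qed.

Lemma Wt_ext K h1 h2 : h1 =1 h2 -> Wt K h1 = Wt K h2.
Proof. by move=> e; apply: eq_bigr => i _; rewrite e. Qed.
Lemma Cs_ext K h1 h2 r : h1 =1 h2 -> Cs K h1 r = Cs K h2 r.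
Proof. by move=> e; apply: eq_bigr => i _; rewrite e. Qed.

Lemma U_clsB p q c1 c7 g : (p == 3) && (q == 5) || (p == 5) && (q == 3) -> clsB (U p q c1 c7 g).
Proof.
move=> hpq i; rewrite /U; have [[-> ->]|[-> ->]] := pq_cases hpq.
all: (case: ifP => h1; last case: ifP => h7 //); lia.
Qed.

Lemma psi_good n L g : 0 < L -> goodA n L g ->
  goodB n L (psi n g) /\ phi n (psi n g) =1 g.
Proof.
move=> hL hA; have [hz hs hw hc] := hA.
have hcl : clsA g by move=> i /hs /andP[].
have hK : 0 < n.+1 by [].
move: hc; rewrite /condN /psi; set X := Cs n.+1 g 1; set Y := Cs n.+1 g 7 => hc.
case: ifP => h3.
  set c1 := 2 * ((X - Y) %/ 3).
  have hc1 : c1 <= g 1 by rewrite /c1; lia.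
  have hTU := @TU 3 5 c1 0 g isT hcl hc1 (leq0n _).
  set f := U 3 5 c1 0 g.
  have hclf : clsB f by apply: U_clsB.
  have hW := @T_W 3 5 c1 0 f n.+1 isT hclf hK.
  have hC1 := @T_C1 3 5 c1 0 f n.+1 hK.
  have hC7 := @T_C7 3 5 c1 0 f n.+1 hK.
  rewrite (Wt_ext _ hTU) in hW; rewrite (Cs_ext _ _ hTU) -/X in hC1;
  rewrite (Cs_ext _ _ hTU) -/Y in hC7.
  split; first by apply: Ugood => //; rewrite -/f; lia.
  move=> i; rewrite /phi -/f; set a := Cs n.+1 f 3; set b := Cs n.+1 f 5.
  rewrite ifT; last by lia.
  rewrite -hTU; congr (T _ _ _ _ _ _); rewrite /c1; lia.
case: ifP => h5.
  set c1 := 4 * ((X - Y) %/ 5).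
  have hc1 : c1 <= g 1 by rewrite /c1; lia.
  have hTU := @TU 5 3 c1 0 g isT hcl hc1 (leq0n _).
  set f := U 5 3 c1 0 g.
  have hclf : clsB f by apply: U_clsB.
  have hW := @T_W 5 3 c1 0 f n.+1 isT hclf hK.
  have hC1 := @T_C1 5 3 c1 0 f n.+1 hK.
  have hC7 := @T_C7 5 3 c1 0 f n.+1 hK.
  rewrite (Wt_ext _ hTU) in hW; rewrite (Cs_ext _ _ hTU) -/X in hC1;
  rewrite (Cs_ext _ _ hTU) -/Y in hC7.
  split; first by apply: Ugood => //; rewrite -/f; lia.
  move=> i; rewrite /phi -/f; set a := Cs n.+1 f 3; set b := Cs n.+1 f 5.
  rewrite ifF; last by lia.
  rewrite ifT; last by lia.
  rewrite -hTU; congr (T _ _ _ _ _ _); rewrite /c1; lia.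
set c1 := (4 * (X - Y) - 3) %/ 5.
have hc1 : c1 <= g 1 by rewrite /c1; lia.
have hc7 : 1 <= g 7 by lia.
have hTU := @TU 5 3 c1 1 g isT hcl hc1 hc7.
set f := U 5 3 c1 1 g.
have hclf : clsB f by apply: U_clsB.
have hW := @T_W 5 3 c1 1 f n.+1 isT hclf hK.
have hC1 := @T_C1 5 3 c1 1 f n.+1 hK.
have hC7 := @T_C7 5 3 c1 1 f n.+1 hK.
rewrite (Wt_ext _ hTU) in hW; rewrite (Cs_ext _ _ hTU) -/X in hC1;
rewrite (Cs_ext _ _ hTU) -/Y in hC7.
split; first by apply: Ugood => //; rewrite -/f; lia.
move=> i; rewrite /phi -/f; set a := Cs n.+1 f 3; set b := Cs n.+1 f 5.
rewrite ifF; last by lia.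
rewrite ifF; last by lia.
rewrite -hTU; congr (T _ _ _ _ _ _); rewrite /c1; lia.
Qed.

Lemma card_bij (T1 T2 : finType) (A : {set T1}) (B : {set T2}) (f : T1 -> T2) (g : T2 -> T1) :
  {in A, forall x, f x \in B} -> {in B, forall y, g y \in A} ->
  {in A, cancel f g} -> {in B, cancel g f} -> #|A| = #|B|.
Proof.
move=> fAB gBA fK gK.
have le (U1 U2 : finType) (A1 : {set U1}) (B1 : {set U2}) (f1 : U1 -> U2) (g1 : U2 -> U1) :
  {in A1, forall x, f1 x \in B1} -> {in A1, cancel f1 g1} -> #|A1| <= #|B1|.
  move=> h1 h2; rewrite -(@card_in_imset _ _ f1 A1).
    apply: subset_leq_card; apply/subsetP => y /imsetP [x hx ->]; exact: h1.
  by move=> x1 x2 h1x h2x e; rewrite -(h2 _ h1x) -(h2 _ h2x) e.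
by apply/eqP; rewrite eqn_leq (le _ _ _ _ _ _ fAB fK) (le _ _ _ _ _ _ gBA gK).
Qed.

Lemma sum_widen (h : nat -> nat) M N : (forall i, M <= i -> h i = 0) -> M <= N ->
  \sum_(i < N) h i = \sum_(i < M) h i.
Proof.
move=> hz hMN; rewrite -!(big_mkord xpredT h) (@big_cat_nat _ _ _ M) //= /=.
rewrite [X in _ + X]big1_seq ?addn0 // => i /andP[_]; rewrite mem_iota => /andP[hi _].
exact: hz.
Qed.

Definition Fm n (m : {ffun 'I_n.+1 -> 'I_n.+1}) (i : nat) : nat :=
  if i < n.+1 then nat_of_ord (m (inord i)) else 0.
Definition Gm n (g : nat -> nat) : {ffun 'I_n.+1 -> 'I_n.+1} := [ffun i : 'I_n.+1 => inord (g i)].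
Arguments Gm {n} g.

Lemma Fm_ord n (m : {ffun 'I_n.+1 -> 'I_n.+1}) (i : 'I_n.+1) : Fm m i = m i.
Proof. by rewrite /Fm ltn_ord inord_val. Qed.

Lemma Fm_big n (m : {ffun 'I_n.+1 -> 'I_n.+1}) i : n < i -> Fm m i = 0.
Proof. by move=> h; rewrite /Fm; case: ifP => //; lia. Qed.

Lemma GFm n (m : {ffun 'I_n.+1 -> 'I_n.+1}) : Gm (Fm m) = m.
Proof. by apply/ffunP => i; rewrite ffunE Fm_ord; apply: val_inj; rewrite /= inordK. Qed.

Lemma FGm n (g : nat -> nat) : (forall i, n < i -> g i = 0) -> (forall i, g i <= n) ->
  Fm (@Gm n g) =1 g.
Proof.
move=> hz hb i; rewrite /Fm; case: ifP => hi; last by rewrite hz // ltnNge -ltnS hi.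
by rewrite ffunE !inordK // ltnS.
Qed.

Lemma Gm_ext n g1 g2 : g1 =1 g2 -> @Gm n g1 = @Gm n g2.
Proof. by move=> e; apply/ffunP => i; rewrite !ffunE e. Qed.

Lemma T_ext p q c1 c7 f1 f2 : f1 =1 f2 -> T p q c1 c7 f1 =1 T p q c1 c7 f2.
Proof. by move=> e i; rewrite /T !e. Qed.
Lemma U_ext p q c1 c7 f1 f2 : f1 =1 f2 -> U p q c1 c7 f1 =1 U p q c1 c7 f2.
Proof. by move=> e i; rewrite /U !e. Qed.

Lemma phi_ext n f1 f2 : f1 =1 f2 -> phi n f1 =1 phi n f2.
Proof.
move=> e; rewrite /phi !(Cs_ext _ _ e).
by case: ifP => _; [|case: ifP => _]; apply: T_ext.
Qed.
Lemma psi_ext n f1 f2 : f1 =1 f2 -> psi n f1 =1 psi n f2.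
Proof.
move=> e; rewrite /psi !(Cs_ext _ _ e).
by case: ifP => _; [|case: ifP => _]; apply: U_ext.
Qed.

Lemma condN_ext n f1 f2 : f1 =1 f2 -> condN n f1 = condN n f2.
Proof. by move=> e; rewrite /condN !(Cs_ext _ _ e) !e. Qed.

Lemma bound_of n g : (forall i, n < i -> g i = 0) -> g 0 = 0 -> Wt n.+1 g = n ->
  forall i, g i <= n.
Proof.
move=> hz h0 hw i; case: (ltnP n i) => [/hz -> //|hi].
case: i hi => [|i] hi; first by rewrite h0.
have hlt : i.+1 < n.+1 * 8 by lia.
have := term_le (fun j => j * g j) hlt; rewrite -/(Wt n.+1 g) hw; nia.
Qed.

Lemma goodA_bound n L g : goodA n L g -> forall i, g i <= n.
Proof.
case=> hz hs hw _; apply: bound_of => //.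
by case: (posnP (g 0)) => // /hs.
Qed.
Lemma goodB_bound n L g : goodB n L g -> forall i, g i <= n.
Proof.
case=> hz hs hw; apply: bound_of => //.
by case: (posnP (g 0)) => // /hs.
Qed.

Lemma goodA_ext n L g1 g2 : g1 =1 g2 -> goodA n L g1 -> goodA n L g2.
Proof.
move=> e [hz hs hw hc]; split.
- by move=> i hi; rewrite -e hz.
- by move=> i; rewrite -e; apply: hs.
- by rewrite -(Wt_ext _ e).
- by rewrite -(condN_ext _ e).
Qed.
Lemma goodB_ext n L g1 g2 : g1 =1 g2 -> goodB n L g1 -> goodB n L g2.
Proof.
move=> e [hz hs hw]; split.
- by move=> i hi; rewrite -e hz.
- by move=> i; rewrite -e; apply: hs.
- by rewrite -(Wt_ext _ e).
Qed.

Lemma part_iff n (m : {ffun 'I_n.+1 -> 'I_n.+1}) :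
  (m \in partitions n) = (Fm m 0 == 0) && (Wt n.+1 (Fm m) == n).
Proof.
rewrite inE -(Fm_ord m ord0) /=; congr (_ && (_ == _)).
rewrite /Wt (@sum_widen (fun i => i * Fm m i) n.+1); last by lia.
  by apply: eq_bigr => i _; rewrite Fm_ord.
by move=> i hi; rewrite Fm_big ?muln0.
Qed.

Lemma parts_inP n (m : {ffun 'I_n.+1 -> 'I_n.+1}) (P : pred nat) :
  reflect (forall i, 0 < Fm m i -> P i) (parts_in m P).
Proof.
apply: (iffP forallP) => h.
  move=> i; case: (ltnP n i) => [hi|hi]; first by rewrite Fm_big.
  by have := h (inord i); rewrite -Fm_ord inordK // => /implyP.
by move=> i; apply/implyP; rewrite -Fm_ord; exact: h.
Qed.

Lemma nu_Cs n (m : {ffun 'I_n.+1 -> 'I_n.+1}) r : r < 8 -> nu m r = Cs n.+1 (Fm m) r.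
Proof.
move=> hr; rewrite /nu /Cs -sum_cls // big_mkcond /=.
rewrite (@sum_widen (fun i => if i %% 8 == r then Fm m i else 0) n.+1); last by lia.
  by apply: eq_bigr => i _; rewrite Fm_ord (modn_small hr).
by move=> i hi; rewrite Fm_big; [case: ifP | ].
Qed.

Lemma mu_Fm n (m : {ffun 'I_n.+1 -> 'I_n.+1}) k : mu m k = Fm m k.
Proof.
rewrite /mu /Fm; case: ifP => hk.
  rewrite (big_pred1 (inord k)) // => i /=.
  by rewrite -val_eqE /= inordK.
rewrite big_pred0 // => i; apply/negbTE/eqP => e; by have := ltn_ord i; rewrite e hk.
Qed.

Lemma cond_iff n (m : {ffun 'I_n.+1 -> 'I_n.+1}) : cond_tilde m = condN n (Fm m).
Proof. by rewrite /cond_tilde /condN !nu_Cs // !mu_Fm. Qed.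

Definition PA L := (fun i => ((i %% 8 == 1) || (i %% 8 == 7)) && (i <= 8 * L - 1)).
Definition PB L := (fun i => ((i %% 8 == 3) || (i %% 8 == 5)) && (i <= 8 * L - 3)).

Lemma memA n L (m : {ffun 'I_n.+1 -> 'I_n.+1}) :
  m \in [set m in partitions n | parts_in m (PA L) && cond_tilde m] -> goodA n L (Fm m).
Proof.
rewrite inE part_iff => /andP[/andP[h0 hw] /andP[/parts_inP hpi hc]].
split => //; [exact: Fm_big | exact/eqP | by rewrite -cond_iff].
Qed.

Lemma memB n L (m : {ffun 'I_n.+1 -> 'I_n.+1}) :
  m \in [set m in partitions n | parts_in m (PB L)] -> goodB n L (Fm m).
Proof.
rewrite inE part_iff => /andP[/andP[h0 hw] /parts_inP hpi].
split => //; [exact: Fm_big | exact/eqP].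
Qed.

Lemma memA' n L g : goodA n L g ->
  @Gm n g \in [set m in partitions n | parts_in m (PA L) && cond_tilde m].
Proof.
move=> hg; have hg0 := hg; case: hg0 => hz _ _ _.
have e := FGm hz (goodA_bound hg).
have [hz' hs' hw' hc'] := goodA_ext (fun i => esym (e i)) hg.
rewrite inE part_iff cond_iff hw' hc' eqxx andbT /= andbT; apply/andP; split.
  by rewrite eqn0Ngt; apply/negP => /hs'.
exact/parts_inP.
Qed.

Lemma memB' n L g : goodB n L g ->
  @Gm n g \in [set m in partitions n | parts_in m (PB L)].
Proof.
move=> hg; have hg0 := hg; case: hg0 => hz _ _.
have e := FGm hz (goodB_bound hg).
have [hz' hs' hw'] := goodB_ext (fun i => esym (e i)) hg.
rewrite inE part_iff hw' eqxx andbT; apply/andP; split.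
  by rewrite eqn0Ngt; apply/negP => /hs'.
exact/parts_inP.
Qed.

Theorem theorem3 (L n : nat) : 1 <= L -> Atilde_L0 L n = A_L1 L n.
Proof.
move=> hL; rewrite /Atilde_L0 /A_L1 -/(PA L) -/(PB L).
apply: (@card_bij _ _ _ _ (fun m => @Gm n (psi n (Fm m))) (fun m => @Gm n (phi n (Fm m)))).
- move=> m /(memA) hA; apply: memB'; exact: (proj1 (psi_good hL hA)).
- move=> m /(memB) hB; apply: memA'; exact: (proj1 (phi_good hL hB)).
- move=> m /(memA) hA /=.
  have [hB hK] := psi_good hL hA.
  have [hz _ _] := hB.
  rewrite (@Gm_ext n _ _ (phi_ext n (FGm hz (goodB_bound hB)))) (@Gm_ext n _ _ hK).
  exact: GFm.
- move=> m /(memB) hB /=.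
  have [hA hK] := phi_good hL hB.
  have [hz _ _ _] := hA.
  rewrite (@Gm_ext n _ _ (psi_ext n (FGm hz (goodA_bound hA)))) (@Gm_ext n _ _ hK).
  exact: GFm.
Qed.
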